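(* Let $(G,\vec E,0,\tau)$ be a game-graph with associated Boolean function $L$. Let $${\cal Z}_{\rm strat}:=\{Z(\sigma_1):\sigma_1\in{\cal S}_1\},\qquad {\cal A}_{\rm strat}:=\{A(\sigma_2):\sigma_2\in{\cal S}_2\}.$$ Then $${\cal Z}(L)\subset{\cal Z}_{\rm strat}\subset{\cal Z}^\uparrow(L)\qquad\text{and}\qquad{\cal A}(L)\subset{\cal A}_{\rm strat}\subset{\cal A}^\uparrow(L).$$
   Context: **Game-graph.** A game-graph is a quadruple $(G,\vec E,0,\tau)$ where: - $(G,\vec E)$ is a finite acyclic directed graph; - $0\in G$ is such that every $v\in G$ is reachable from $0$ by a directed path; - $\tau:\mathring G\to\{1,2\}$. Here ${\cal O}(v):=\{w:(v,w)\in\vec E\}$, $\partial G:=\{v:{\cal O}(v)=\emptyset\}$ (possible outcomes), $\mathring G:=G\setminus\partial G$, and $\mathring G^i:=\{v\in\mathring G:\tau(v)=i\}$ (Alice moves at $\tau=1$, Bob at $\tau=2$). **Strategies.** A strategy for Alice is a map $\sigma_1$ on $\mathring G^1$ with $\sigma_1(v)\in{\cal O}(v)$; strategies $\sigma_2$ for Bob are defined similarly on $\mathring G^2$. ${\cal S}_1$ and ${\cal S}_2$ denote the sets of strategies. Given $\sigma_1,\sigma_2$, there is a unique path $0=v_0,\dots,v_n$ with $v_n\in\partial G$ and $v_{k+1}=\sigma_{\tau(v_k)}(v_k)$; set $o(\sigma_1,\sigma_2):=v_n$. Define $$Z(\sigma_1):=\{o(\sigma_1,\sigma'):\sigma'\in{\cal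 S}_2\},\qquad A(\sigma_2):=\{o(\sigma',\sigma_2):\sigma'\in{\cal S}_1\}.$$ **Boolean function.** For $x:\partial G\to\{0,1\}$ extend to $\bar x$ on $G$ by $\bar x=x$ on $\partial G$, $\bar x(v)=\min_{w\in{\cal O}(v)}\bar x(w)$ for $v\in\mathring G^1$, and $\bar x(v)=\max_{w\in{\cal O}(v)}\bar x(w)$ for $v\in\mathring G^2$. Set $L(x):=\bar x(0)$, a monotone Boolean function on $\{0,1\}^{\partial G}$. **One-sets and zero-sets.** A one-set of $L$ is $A\subset\partial G$ with $L(1_A)=1$; a zero-set is $Z\subset\partial G$ with $L(1-1_Z)=0$; minimal means containing no other such set as a proper subset. ${\cal A}^\uparrow(L)$ and ${\cal Z}^\uparrow(L)$ denote the sets of one-sets and zero-sets, and ${\cal A}(L)$ and ${\cal Z}(L)$ the minimal ones. *)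

(* Defs.v *)
From mathcomp Require Import all_boot.
Set Implicit Arguments. Unset Strict Implicit. Unset Printing Implicit Defensive.

Section GameGraph.
Variables (V : finType) (e : rel V) (root : V) (alice : V -> bool).
(* Game-graph (G, E, 0, tau): vertices V, edges e, root 0 = root,
   tau v = 1 (Alice) iff alice v = true, tau v = 2 (Bob) iff alice v = false;
   alice is only relevant on interior vertices. *)

Definition out (v : V) : {set V} := [set w | e v w].
Definition leaf (v : V) : bool := out v == set0.
Definition boundary : {set V} := [set v | leaf v].

Definition acyclic : Prop := forall v w, e v w -> ~~ connect e w v.
Definition rooted : Prop := forall v, connect e root v.

(* Strategies: maps choosing an out-neighbour at each interior vertex of the
   player; values elsewhere are irrelevant. *)
Definition strat1 (s : {ffun V -> V}) : bool :=
  [forall v, (~~ leaf v && alice v) ==> e v (s v)].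
Definition strat2 (s : {ffun V -> V}) : bool :=
  [forall v, (~~ leaf v && ~~ alice v) ==> e v (s v)].

Definition step (s1 s2 : {ffun V -> V}) (v : V) : V :=
  if leaf v then v else if alice v then s1 v else s2 v.

(* o(s1,s2): end of the play; in an acyclic graph the play reaches a leaf in
   fewer than #|V| steps, and leaves are fixed points of step. *)
Definition outcome (s1 s2 : {ffun V -> V}) : V := iter #|V| (step s1 s2) root.

Definition Zof (s1 : {ffun V -> V}) : {set V} :=
  [set v | [exists s2, strat2 s2 && (outcome s1 s2 == v)]].
Definition Aof (s2 : {ffun V -> V}) : {set V} :=
  [set v | [exists s1, strat1 s1 && (outcome s1 s2 == v)]].

Fixpoint xbar (k : nat) (x : V -> bool) (v : V) : bool :=
  match k with
  | 0 => x v
  | k'.+1 => if leaf v then x v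
             else if alice v then [forall w, e v w ==> xbar k' x w]
             else [exists w, e v w && xbar k' x w]
  end.
Definition L (x : V -> bool) : bool := xbar #|V| x root.

Definition one_set (A : {set V}) : bool :=
  (A \subset boundary) && L (fun v => v \in A).
Definition zero_set (Z : {set V}) : bool :=
  (Z \subset boundary) && ~~ L (fun v => v \notin Z).
Definition min_one_set (A : {set V}) : Prop :=
  one_set A /\ forall B : {set V}, B \proper A -> ~~ one_set B.
Definition min_zero_set (Z : {set V}) : Prop :=
  zero_set Z /\ forall B : {set V}, B \proper Z -> ~~ zero_set B.

End GameGraph.

(* Main.v *)
Require Import Defs.
From mathcomp Require Import all_boot.
Set Implicit Arguments. Unset Strict Implicit.

Section S.
Variables (V : finType) (e : rel V) (root : V) (alice : V -> bool).
Hypothesis Hacyc : acyclic e.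

Lemma nowalk (f : nat -> V) : ~ (forall i, i < #|V| -> e (f i) (f i.+1)).
Proof.
move=> H.
have [i [j [ij fij]]] : exists i j : 'I_#|V|.+1, i < j /\ f i = f j.
  pose g := fun i : 'I_#|V|.+1 => f i.
  have : ~~ injectiveb g.
    apply/negP => /injectiveP inj; have := leq_card _ inj.
    by rewrite card_ord ltnn.
  case/injectivePn => a [b ab gab].
  case: (ltngtP a b) => [lt|lt|eq].
  - by exists a, b.
  - by exists b, a.
  - by move: ab; rewrite (val_inj eq) eqxx.
have conn : forall d a, a + d <= #|V| -> connect e (f a) (f (a + d)).
  elim=> [|d IH] a le; first by rewrite addn0 connect0.
  apply: connect_trans (IH a _) _; first by apply: leq_trans le; rewrite leq_add2l.
  rewrite addnS; apply: connect1; apply: H; by rewrite -addnS.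
have jle : (j <= #|V|)%N by rewrite -ltnS.
have e1 : e (f i) (f i.+1) by apply: H; exact: leq_trans ij jle.
have := Hacyc e1; rewrite fij.
have -> : (j : nat) = i.+1 + (j - i.+1) by rewrite subnKC.
by rewrite conn // subnKC.
Qed.

Lemma xbar_leaf k x v : leaf e v -> xbar e alice k x v = x v.
Proof. by case: k => //= k ->. Qed.

Definition walk n v := exists f : nat -> V, f 0 = v /\ forall i, i < n -> e (f i) (f i.+1).

Lemma stab x n : forall v, ~ walk n v -> forall k, n <= k ->
  xbar e alice k x v = xbar e alice n x v.
Proof.
elim: n => [|n IH] v nw k lk.
  by exfalso; apply: nw; exists (fun _ => v); split.
case: k lk => [|k] //= lk.
case: (leaf e v) => //.
have H : forall w, e v w -> xbar e alice k x w = xbar e alice n x w.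
  move=> w evw; apply: IH => //.
  move=> [f [f0 Hf]]; apply: nw.
  exists (fun i => if i is i'.+1 then f i' else v); split => //.
  by case=> [|i] /= Hi; [rewrite f0 | exact: Hf].
case: (alice v).
  by apply: eq_forallb => w; case evw: (e v w) => //=; rewrite H.
by apply: eq_existsb => w; case evw: (e v w) => //=; rewrite H.
Qed.

Lemma nowalkV v : ~ walk #|V| v.
Proof. by move=> [f [_ Hf]]; exact: nowalk Hf. Qed.

Definition val x v := xbar e alice #|V| x v.

Lemma val_rec x v : val x v = if leaf e v then x v else if alice v
  then [forall w, e v w ==> val x w] else [exists w, e v w && val x w].
Proof. by rewrite /val -(@stab x #|V| v (@nowalkV v) #|V|.+1 (leqnSn #|V|)). Qed.

Lemma val_leaf x v : leaf e v -> val x v = x v.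
Proof. exact: xbar_leaf. Qed.

Definition choose (P : V -> bool) : {ffun V -> V} :=
  [ffun v => if [pick w | e v w && P w] is Some w then w
             else if [pick w | e v w] is Some w then w else v].

Lemma choose_edge P v : ~~ leaf e v -> e v (choose P v).
Proof.
rewrite ffunE; case: pickP => [w /andP[]//|_].
case: pickP => [w //|H].
by rewrite /leaf /out => /set0Pn [w]; rewrite inE H.
Qed.

Lemma choose_P P v : (exists w, e v w && P w) -> P (choose P v) && e v (choose P v).
Proof.
rewrite ffunE; case: pickP => [w /andP[a b] _|H [w]]; first by rewrite a b.
by rewrite H.
Qed.

Lemma strat1_choose P : strat1 e alice (choose P).
Proof. by apply/forallP => v; apply/implyP => /andP[nl _]; exact: choose_edge. Qed.
Lemma strat2_choose P : strat2 e alice (choose P).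
Proof. by apply/forallP => v; apply/implyP => /andP[nl _]; exact: choose_edge. Qed.

Lemma step_edge s1 s2 v : strat1 e alice s1 -> strat2 e alice s2 -> ~~ leaf e v ->
  e v (step e alice s1 s2 v).
Proof.
move=> /forallP H1 /forallP H2 nl; rewrite /step (negbTE nl).
case av: (alice v).
  by apply: (implyP (H1 v)); rewrite nl av.
by apply: (implyP (H2 v)); rewrite nl av.
Qed.

Lemma leaf_outcome s1 s2 : strat1 e alice s1 -> strat2 e alice s2 ->
  leaf e (outcome e root alice s1 s2).
Proof.
move=> v1 v2; apply/negPn/negP => /negP nl.
pose f i := iter i (step e alice s1 s2) root.
have fix_leaf : forall d u, leaf e u -> iter d (step e alice s1 s2) u = u.
  by move=> d u lu; elim: d => //= d ->; rewrite /step lu.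
apply: (@nowalk f) => i lti.
apply: step_edge => //; apply/negP => li.
apply: nl; rewrite /outcome.
have -> : #|V| = (#|V| - i) + i by rewrite subnK // ltnW.
by rewrite iterD fix_leaf.
Qed.

Lemma iter_inv (g : V -> V) (P : V -> bool) u n :
  (forall y, P y -> P (g y)) -> P u -> P (iter n g u).
Proof. by move=> H Pu; elim: n => //= n IH; apply: H. Qed.

Lemma out_true x s1 : strat1 e alice s1 -> val x root ->
  x (outcome e root alice s1 (choose (val x))).
Proof.
move=> v1 vr; rewrite -val_leaf; last by apply: leaf_outcome => //; exact: strat2_choose.
apply: iter_inv vr => y; rewrite [val x y]val_rec /step.
case ly: (leaf e y) => //; first by rewrite val_rec ly.
case ay: (alice y).
  move/forallP/(_ (s1 y))/implyP; apply.
  by apply: (implyP (forallP v1 y)); rewrite ly ay.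
by move/existsP/choose_P/andP => [].
Qed.

Lemma out_false x s2 : strat2 e alice s2 -> ~~ val x root ->
  ~~ x (outcome e root alice (choose (fun v => ~~ val x v)) s2).
Proof.
move=> v2 vr; rewrite -val_leaf; last by apply: leaf_outcome => //; exact: strat1_choose.
apply: (@iter_inv _ (fun v => ~~ val x v)) vr => y; rewrite [val x y]val_rec /step.
case ly: (leaf e y) => //; first by rewrite val_rec ly.
case ay: (alice y).
  rewrite negb_forall => /existsP [w]; rewrite negb_imply => ew.
  by case/andP: (@choose_P (fun v => ~~ val x v) y (ex_intro _ w ew)).
rewrite negb_exists => /forallP/(_ (s2 y)).
rewrite (_ : e y (s2 y) = true) //.
by apply: (implyP (forallP v2 y)); rewrite ly ay.
Qed.

End S.

Lemma zof_zero (V : finType) (e : rel V) (root : V) (alice : V -> bool)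
  (Hacyc : acyclic e) s1 : strat1 e alice s1 -> zero_set e root alice (Zof e root alice s1).
Proof.
move=> v1; apply/andP; split.
  apply/subsetP => v; rewrite inE => /existsP [s2 /andP [v2 /eqP <-]].
  by rewrite inE; apply: leaf_outcome.
apply/negP => Lx.
have := out_true Hacyc v1 Lx; rewrite inE => H. move: H => /negP; apply.
by apply/existsP; exists (choose e (val e alice (fun v => v \notin Zof e root alice s1))); rewrite strat2_choose eqxx.
Qed.

Lemma aof_one (V : finType) (e : rel V) (root : V) (alice : V -> bool)
  (Hacyc : acyclic e) s2 : strat2 e alice s2 -> one_set e root alice (Aof e root alice s2).
Proof.
move=> v2; apply/andP; split.
  apply/subsetP => v; rewrite inE => /existsP [s1 /andP [v1 /eqP <-]].
  by rewrite inE; apply: leaf_outcome.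
apply/negPn/negP => Lx.
have := out_false Hacyc v2 Lx.
by move/negP; apply; rewrite inE; apply/existsP; exists (choose e (fun v => ~~ val e alice (fun v => v \in Aof e root alice s2) v)); rewrite strat1_choose eqxx.
Qed.

Theorem lemma7 (V : finType) (e : rel V) (root : V) (alice : V -> bool)
  (Hacyc : acyclic e) (Hroot : rooted e root) :
  (* Z(L) ⊂ Z_strat ⊂ Z↑(L) *)
  ((forall Z : {set V}, min_zero_set e root alice Z ->
      exists2 s1, strat1 e alice s1 & Z = Zof e root alice s1) /\
   (forall s1, strat1 e alice s1 -> zero_set e root alice (Zof e root alice s1))) /\
  (* A(L) ⊂ A_strat ⊂ A↑(L) *)
  ((forall A : {set V}, min_one_set e root alice A ->
      exists2 s2, strat2 e alice s2 & A = Aof e root alice s2) /\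
   (forall s2, strat2 e alice s2 -> one_set e root alice (Aof e root alice s2))).
Proof.
split; split; [ | by move=> s; exact: zof_zero | | by move=> s; exact: aof_one].
- move=> Z [/andP [Zb Lx] Hmin].
  set s1 := choose e (fun v => ~~ val e alice (fun v => v \notin Z) v).
  have v1 : strat1 e alice s1 by exact: strat1_choose.
  exists s1 => //.
  have sub : Zof e root alice s1 \subset Z.
    apply/subsetP => v; rewrite inE => /existsP [s2 /andP [v2 /eqP <-]].
    by have := out_false Hacyc v2 Lx; rewrite negbK.
  case: (boolP (Zof e root alice s1 \proper Z)) => pr.
    by have := Hmin _ pr; rewrite zof_zero.
  apply/eqP; rewrite eqEsubset sub andbT.
  by move: pr; rewrite properE sub /= negbK.
- move=> A [/andP [Ab Lx] Hmin].
  set s2 := choose e (val e alice (fun v => v \in A)).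
  have v2 : strat2 e alice s2 by exact: strat2_choose.
  exists s2 => //.
  have sub : Aof e root alice s2 \subset A.
    apply/subsetP => v; rewrite inE => /existsP [s1 /andP [v1 /eqP <-]].
    by have := out_true Hacyc v1 Lx.
  case: (boolP (Aof e root alice s2 \proper A)) => pr.
    by have := Hmin _ pr; rewrite aof_one.
  apply/eqP; rewrite eqEsubset sub andbT.
  by move: pr; rewrite properE sub /= negbK.
Qed.
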